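(* Let $X\in\{A_4,D_6,E_8\}$ with rank $n\in\{4,6,8\}$, and let $\alpha_1,\dots,\alpha_n$ be a basis of $\mathbb{R}^n$ equipped with an inner product $(\cdot\mid\cdot)$ such that $(\alpha_i\mid\alpha_i)=2$ and $2(\alpha_i\mid\alpha_j)/(\alpha_i\mid\alpha_i)$ is the Cartan matrix of $X$. Then there is no simply-laced affine double extension of $X$ with trivial projection kernel; that is, there do not exist vectors $\beta,\gamma\in\mathbb{R}^n=\mathrm{span}(\alpha_1,\dots,\alpha_n)$ such that the $(n+2)\times(n+2)$ matrix $C_{uv}=2(u\mid v)/(u\mid u)$, $u,v\in(\beta,\gamma,\alpha_1,\dots,\alpha_n)$, is a simply-laced Kac–Moody-type extension of the Cartan matrix of $X$ by two nodes, i.e. has all diagonal entries $2$, all off-diagonal entries in $\{0,-1\}$ (with $(\beta\mid\beta)=(\gamma\mid\gamma)=2$), and $\det C=0$.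
   Context: Dynkin labellings: $A_4$: chain $\alpha_1-\alpha_2-\alpha_3-\alpha_4$; $D_6$: chain $\alpha_1-\cdots-\alpha_5$ with $\alpha_6$ joined to $\alpha_4$; $E_8$: chain $\alpha_1-\cdots-\alpha_7$ with $\alpha_8$ joined to $\alpha_5$. The Cartan matrix of these simply-laced diagrams has diagonal entries $2$, entries $-1$ for joined nodes and $0$ otherwise. ''Trivial projection kernel'' means that both additional roots lie in the span of the simple roots of $X$ (so that they can be projected with the same linear projection as the roots of $X$). *)

(* Defs.v *)
From HB Require Import structures.
From mathcomp Require Import all_boot all_order all_algebra.
From mathcomp Require Import reals.
Set Implicit Arguments. Unset Strict Implicit. Unset Printing Implicit Defensive.
Import Order.TTheory GRing.Theory Num.Theory.
Local Open Scope ring_scope.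

Inductive dynkin := A4 | D6 | E8.

Definition rank (X : dynkin) : nat :=
  match X with A4 => 4 | D6 => 6 | E8 => 8 end.

(* Adjacency of (0-indexed) nodes: node k here is alpha_(k+1) of the paper.
   A4: chain 0-1-2-3.  D6: chain 0-..-4, node 5 joined to node 3.
   E8: chain 0-..-6, node 7 joined to node 4. *)
Definition chain_adj (m i j : nat) : bool :=
  [&& i < m, j < m & ((i == j.+1) || (j == i.+1))]%N.

Definition dynkin_adj (X : dynkin) (i j : nat) : bool :=
  match X with
  | A4 => chain_adj 4 i j
  | D6 => chain_adj 5 i j || ((i == 5) && (j == 3)) || ((i == 3) && (j == 5))
  | E8 => chain_adj 7 i j || ((i == 7) && (j == 4)) || ((i == 4) && (j == 7))
  end%N.

Definition cartan (R : ringType) (X : dynkin) : 'M[R]_(rank X) :=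
  \matrix_(i, j) (if i == j then 2 else if dynkin_adj X i j then -1 else 0).

Definition ip (R : ringType) (n : nat) (G : 'M[R]_n) (u v : 'cV[R]_n) : R :=
  (u^T *m G *m v) 0 0.

Definition inner_product (R : realFieldType) (n : nat) (G : 'M[R]_n) : Prop :=
  G^T = G /\ forall x : 'cV[R]_n, x != 0 -> 0 < ip G x x.

Definition gen_cartan (R : fieldType) (n m : nat) (G : 'M[R]_n)
  (V : 'M[R]_(n, m)) : 'M[R]_m :=
  \matrix_(i, j) (2 * ip G (col i V) (col j V) / ip G (col i V) (col i V)).

(* The family (beta, gamma, alpha_1, ..., alpha_n) as the columns of a matrix,
   where the alpha's are the columns of P. *)
Definition ext_family (R : ringType) (n : nat) (beta gamma : 'cV[R]_n)
  (P : 'M[R]_n) : 'M[R]_(n, 1 + 1 + n) :=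
  row_mx (row_mx beta gamma) P.

(* Main.v *)
Require Import Defs.
From HB Require Import structures.
From mathcomp Require Import all_boot all_order all_algebra.
From mathcomp Require Import reals.
Import Order.TTheory GRing.Theory Num.Theory.
Local Open Scope ring_scope.

Definition sumI (n : nat) (f : nat -> int) : int :=
  foldr (fun i acc => f i + acc) 0 (iota 0 n).
Definition Qf n (K : nat -> nat -> int) (s t : seq bool) : int :=
  sumI n (fun j => sumI n (fun i => (nth false s i)%:Z * K i j) * (nth false t j)%:Z).
Fixpoint all_bools (n : nat) : seq (seq bool) :=
  match n with 0 => [:: [::]] | n.+1 =>
    [seq b :: l | b <- [:: true; false], l <- all_bools n] end.
Definition cf (X : dynkin) (i j : nat) : int :=
  if (i == j)%N then 2 else if dynkin_adj X i j then -1 else 0.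
Definition Kl (X : dynkin) : seq (seq int) :=
  match X with
  | A4 => [:: [:: 4; 3; 2; 1]; [:: 3; 6; 4; 2]; [:: 2; 4; 6; 3]; [:: 1; 2; 3; 4]]
  | D6 => [:: [:: 4; 4; 4; 4; 2; 2]; [:: 4; 8; 8; 8; 4; 4]; [:: 4; 8; 12; 12; 6; 6]; [:: 4; 8; 12; 16; 8; 8]; [:: 2; 4; 6; 8; 6; 4]; [:: 2; 4; 6; 8; 4; 6]]
  | E8 => [:: [:: 2; 3; 4; 5; 6; 4; 2; 3]; [:: 3; 6; 8; 10; 12; 8; 4; 6]; [:: 4; 8; 12; 15; 18; 12; 6; 9]; [:: 5; 10; 15; 20; 24; 16; 8; 12]; [:: 6; 12; 18; 24; 30; 20; 10; 15]; [:: 4; 8; 12; 16; 20; 14; 7; 10]; [:: 2; 4; 6; 8; 10; 7; 4; 5]; [:: 3; 6; 9; 12; 15; 10; 5; 8]]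
  end.
Definition Kf X (i j : nat) : int := nth 0 (nth [::] (Kl X) i) j.
Definition dX (X : dynkin) : int := match X with A4 => 5 | D6 => 4 | E8 => 1 end.

Definition chk_sym n (c : nat -> nat -> int) :=
  all (fun i => all (fun j => c i j == c j i) (iota 0 n)) (iota 0 n).
Definition chk_inv n (K c : nat -> nat -> int) (d : int) :=
  all (fun i => all (fun j => sumI n (fun k => K i k * c k j) == d * (i == j)%:Z) (iota 0 n)) (iota 0 n).
Definition chk_main n (K : nat -> nat -> int) (d : int) :=
  all (fun s => if Qf n K s s == 2 * d then
     all (fun t => if Qf n K t t == 2 * d then (Qf n K s t != 0) && (Qf n K s t != - d) else true) (all_bools n)
     else true) (all_bools n).

Lemma checks X : [&& chk_sym (rank X) (cf X), chk_inv (rank X) (Kf X) (cf X) (dX X)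
   & chk_main (rank X) (Kf X) (dX X)].
Proof. by case: X; vm_compute. Qed.

Lemma foldr_big (f : nat -> int) r :
  foldr (fun i acc => f i + acc) 0 r = \sum_(i <- r) f i.
Proof. by elim: r => [|a r IH] /=; rewrite ?big_nil ?big_cons ?IH. Qed.

Lemma sumIE n f : sumI n f = \sum_(i < n) f i.
Proof. by rewrite /sumI foldr_big -(big_mkord xpredT) /index_iota subn0. Qed.

Lemma in_all_bools l : l \in all_bools (size l).
Proof.
elim: l => [|b l IH] //.
change (b :: l \in [seq b :: l | b <- [:: true; false], l <- all_bools (size l)]).
by apply: (allpairs_f (fun b l => b :: l)) => //; case: b.
Qed.

Lemma ip_col (R : ringType) n (G : 'M[R]_n) (v : 'cV_n) (P : 'M_n) j :
  ip G v (col j P) = (v^T *m G *m P) 0 j.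
Proof. by rewrite /ip colE mulmxA -colE mxE. Qed.

Lemma ip_cols (R : ringType) n (G : 'M[R]_n) (P : 'M_n) i j :
  ip G (col i P) (col j P) = (P^T *m G *m P) i j.
Proof. by rewrite ip_col tr_col rowE -!mulmxA -rowE mxE !mulmxA. Qed.
Definition rowl n (s : seq bool) : 'rV[int]_n := \row_i (nth false s i)%:Z.

Lemma rowlQ n (K : nat -> nat -> int) s t :
  (rowl n s *m (\matrix_(i, j) K i j) *m (rowl n t)^T) 0 0 = Qf n K s t.
Proof.
rewrite /Qf mxE sumIE; apply: eq_bigr => j _.
rewrite !mxE sumIE; congr (_ * _); apply: eq_bigr => i _; by rewrite !mxE.
Qed.

Lemma generic (R : realType) n (c K : nat -> nat -> int) (d : int) (G P : 'M[R]_n) :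
  d != 0 -> chk_sym n c -> chk_inv n K c d -> chk_main n K d ->
  P \in unitmx ->
  (forall i j : 'I_n, ip G (col i P) (col j P) = (c i j)%:~R) ->
  forall beta gamma : 'cV[R]_n,
  ip G beta beta = 2 -> ip G gamma gamma = 2 ->
  (forall j : 'I_n, ip G beta (col j P) = 0 \/ ip G beta (col j P) = -1) ->
  (forall j : 'I_n, ip G gamma (col j P) = 0 \/ ip G gamma (col j P) = -1) ->
  (ip G beta gamma = 0 \/ ip G beta gamma = -1) -> False.
Proof.
move=> dn0 Hs Hi Hm Pu HPP beta gamma Hbb Hgg Hb Hg Hbg.
pose Cz : 'M[int]_n := \matrix_(i, j) c i j.
pose Kz : 'M[int]_n := \matrix_(i, j) K i j.
pose A := map_mx intr Cz : 'M[R]_n.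
have HA : P^T *m G *m P = A.
  by apply/matrixP => i j; rewrite -ip_cols HPP !mxE.
have Csym : Cz^T = Cz.
  apply/matrixP => i j; rewrite !mxE.
  move/allP: Hs => /(_ j); rewrite mem_iota ltn_ord => /(_ isT) /allP /(_ i).
  by rewrite mem_iota ltn_ord => /(_ isT) /eqP.
have Asym : A^T = A by rewrite /A map_trmx Csym.
have KC : Kz *m Cz = d%:M.
  apply/matrixP => i j; rewrite !mxE.
  move/allP: Hi => /(_ i); rewrite mem_iota ltn_ord => /(_ isT) /allP /(_ j).
  rewrite mem_iota ltn_ord => /(_ isT) /eqP; rewrite sumIE => H.
  transitivity (\sum_(k < n) K i k * c k j); first by apply: eq_bigr => k _; rewrite !mxE.
  rewrite H; case: (i =P j) => [->|/eqP ne]; first by rewrite eqxx mulr1.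
  have ne2 : (i : nat) != j by []. rewrite (negbTE ne2) mulr0n; exact: mulr0.
pose Km := map_mx intr Kz : 'M[R]_n.
have KA : Km *m A = (d%:~R)%:M by rewrite -map_mxM KC map_scalar_mx.
pose bv (v : 'cV[R]_n) := v^T *m G *m P.
have ipE v w : ip G v w = (d%:~R)^-1 * (bv v *m Km *m (bv w)^T) 0 0.
  have -> : v = P *m (invmx P *m v) by rewrite mulKVmx.
  have -> : w = P *m (invmx P *m w) by rewrite mulKVmx.
  set x := invmx P *m v; set y := invmx P *m w.
  have bvE z : bv (P *m z) = z^T *m A by rewrite /bv trmx_mul -HA !mulmxA.
  rewrite !bvE; clearbody x y; rewrite trmx_mul Asym trmxK -!mulmxA (mulmxA Km) KA mul_scalar_mx.
  rewrite -!scalemxAr mxE mulrA mulVf ?mul1r ?intr_eq0 //.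
  by rewrite /ip trmx_mul -HA !mulmxA.
have dR0 : (d%:~R : R) != 0 by rewrite intr_eq0.
have bvcol v j : bv v 0 j = ip G v (col j P) by rewrite ip_col.
have sgn v : (forall j, ip G v (col j P) = 0 \/ ip G v (col j P) = -1) ->
    bv v = - map_mx intr (rowl n [seq bv v 0 i == -1 | i <- enum 'I_n]).
  move=> Hv; have Hbv := bvcol v; move: (bv v) Hbv => b Hbv.
  apply/matrixP => i j; rewrite (ord1 i) !mxE (nth_map j) ?size_enum_ord //.
  rewrite nth_ord_enum Hbv; case: (Hv j) => ->.
    by rewrite eq_sym oppr_eq0 oner_eq0 /= mulr0z oppr0.
  by rewrite eqxx.
have key v w : (forall j, ip G v (col j P) = 0 \/ ip G v (col j P) = -1) ->
   (forall j, ip G w (col j P) = 0 \/ ip G w (col j P) = -1) ->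
   ip G v w = (d%:~R)^-1 * (Qf n K [seq bv v 0 i == -1 | i <- enum 'I_n]
                                   [seq bv w 0 i == -1 | i <- enum 'I_n])%:~R.
  move=> Hv Hw; rewrite ipE {1}(sgn v Hv) {1}(sgn w Hw) linearN /= !mulNmx mulmxN opprK.
  by rewrite map_trmx -!map_mxM mxE rowlQ.
have inb v : [seq bv v 0 i == -1 | i <- enum 'I_n] \in all_bools n.
  by have := in_all_bools [seq bv v 0 i == -1 | i <- enum 'I_n]; rewrite size_map size_enum_ord.
have solve v w (e : int) : (d%:~R : R)^-1 * (Qf n K v w)%:~R = e%:~R -> Qf n K v w = e * d.
  move=> H; apply: (@intr_inj R); rewrite intrM -H mulrAC mulVf ?mul1r //.
have Eb : Qf n K [seq bv beta 0 i == -1 | i <- enum 'I_n] [seq bv beta 0 i == -1 | i <- enum 'I_n] = 2 * d.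
  by apply: solve; rewrite -key.
have Eg : Qf n K [seq bv gamma 0 i == -1 | i <- enum 'I_n] [seq bv gamma 0 i == -1 | i <- enum 'I_n] = 2 * d.
  by apply: solve; rewrite -key.
move/allP: Hm => /(_ _ (inb beta)); rewrite Eb eqxx => /allP /(_ _ (inb gamma)).
rewrite Eg eqxx => /andP [H0 H1].
case: Hbg; rewrite key //.
  by move=> /(solve _ _ 0); rewrite mul0r => /eqP; rewrite (negbTE H0).
by move=> /(solve _ _ (-1)); rewrite mulN1r => /eqP; rewrite (negbTE H1).
Qed.
Lemma cartanE (R : realType) X (i j : 'I_(rank X)) : cartan R X i j = (cf X i j)%:~R.
Proof.
rewrite mxE /cf.
have -> : (nat_of_ord i == nat_of_ord j) = (i == j) by [].
by case: (i == j) => //; case: dynkin_adj.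
Qed.

Lemma gcE (R : realType) n m (G : 'M[R]_n) (V : 'M[R]_(n, m)) a b :
  ip G (col a V) (col a V) = 2 -> gen_cartan G V a b = ip G (col a V) (col b V).
Proof.
move=> H; rewrite mxE H (mulrC 2) -mulrA divff ?mulr1 //.
by rewrite pnatr_eq0.
Qed.

Lemma dX_neq0 X : dX X != 0. Proof. by case: X. Qed.

Theorem mainTheorem4 (R : realType) (X : dynkin)
  (G : 'M[R]_(rank X)) (P : 'M[R]_(rank X)) :
  inner_product G ->
  P \in unitmx ->
  (forall i j, ip G (col i P) (col j P) = cartan R X i j) ->
  ~ exists beta gamma : 'cV[R]_(rank X),
      let C := gen_cartan G (ext_family beta gamma P) in
      [/\ ip G beta beta = 2, ip G gamma gamma = 2,
          (forall i, C i i = 2),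
          (forall i j, i != j -> C i j = 0 \/ C i j = -1)
        & \det C = 0].
Proof.
move=> _ Pu HP [beta [gamma /= [Hbb Hgg _ Hoff _]]].
have /and3P [Hs Hi Hm] := checks X.
have dn0 := dX_neq0 X.
pose V := ext_family beta gamma P.
pose i0 : 'I_(1 + 1 + rank X) := lshift (rank X) (lshift 1 ord0).
pose i1 : 'I_(1 + 1 + rank X) := lshift (rank X) (rshift 1 ord0).
pose ik (k : 'I_(rank X)) : 'I_(1 + 1 + rank X) := rshift (1 + 1) k.
have c0 : col i0 V = beta.
  by rewrite /V /i0 /ext_family !colKl; apply/matrixP => i j; rewrite (ord1 j) mxE.
have c1 : col i1 V = gamma by rewrite /V /i1 /ext_family colKl colKr; apply/matrixP => i j; rewrite (ord1 j) mxE.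
have ck k : col (ik k) V = col k P by rewrite /V /ik /ext_family colKr.
have Hgen := @generic R (rank X) (cf X) (Kf X) (dX X) G P dn0 Hs Hi Hm Pu.
apply: (Hgen _ beta gamma Hbb Hgg).
- by move=> i j; rewrite HP cartanE.
- move=> j; have := Hoff i0 (ik j).
  rewrite gcE -/V c0 // ck; apply.
  by apply/eqP => /(congr1 val).
- move=> j; have := Hoff i1 (ik j).
  rewrite gcE -/V c1 // ck; apply.
  by apply/eqP => /(congr1 val).
- have := Hoff i0 i1.
  rewrite gcE -/V c0 // c1; apply.
  by apply/eqP => /(congr1 val).
Qed.
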